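(* Let $\mathcal S=\mathbb C[s,s^{-1},(s-1)^{-1}]$ (the ring of rational functions in $s$ over $\mathbb C$ whose only possible poles in $\mathbb C$ are at $s=0$ and $s=1$), let $\mathcal R=\mathbb C[t,t^{-1},u]/(u^2-t^2-4t)$, and for a fixed $a\in\mathbb C$ with $a\neq 0$ let $\mathcal A=\mathcal A_a=\mathbb C[(z^2-a^2)^k,\ z(z^2-a^2)^k \mid k\in\mathbb Z]$ be the subalgebra of the field $\mathbb C(z)$ generated by the elements $(z^2-a^2)^k$ and $z(z^2-a^2)^k$ for $k\in\mathbb Z$. Then: (1) There is a ring isomorphism $\mathcal R\to\mathcal S$ given by $t\mapsto s^{-1}(s-1)^2$ and $u\mapsto s-s^{-1}$. (2) The rings $\mathcal R$ and $\mathcal A$ are isomorphic.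
   Context: All rings are commutative $\mathbb C$-algebras; in $\mathcal R$ the element $t$ is invertible and $u$ satisfies $u^2=t^2+4t$. *)

(* Defs.v *)
From HB Require Import structures.
From mathcomp Require Import all_boot all_order all_algebra.
From mathcomp Require Import reals.
From mathcomp Require Import complex.
From mathcomp Require Import mpoly.

Set Implicit Arguments.
Unset Strict Implicit.
Unset Printing Implicit Defensive.

Import Order.TTheory GRing.Theory Num.Theory.
Local Open Scope ring_scope.

(* The complex numbers: C = R[i] for R : realType (any realType is a model
   of the real numbers). *)

(* Indices of the three generators of C[T, W, U]:
   T stands for t, W for t^{-1}, U for u. *)
Definition iT : 'I_3 := @Ordinal 3 0 isT.
Definition iW : 'I_3 := @Ordinal 3 1 isT.
Definition iU : 'I_3 := @Ordinal 3 2 isT.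

(* The defining ideal I = (T*W - 1, U^2 - T^2 - 4T) of
   R = C[t, t^{-1}, u]/(u^2 - t^2 - 4t) = C[T, W, U]/I, as a Prop-valued
   membership predicate: p lies in the ideal generated by the two relations. *)
Definition in_R_ideal (K : comNzRingType) (p : {mpoly K[3]}) : Prop :=
  exists q r : {mpoly K[3]},
    p = q * ('X_iT * 'X_iW - 1) + r * ('X_iU ^+ 2 - 'X_iT ^+ 2 - 4%:R *: 'X_iT).

Definition in_gen_subalg (F : fieldType) (L : comNzRingType) (emb : F -> L)
    (gen : L -> Prop) (x : L) : Prop :=
  forall P : L -> Prop,
    (forall c, P (emb c)) ->
    (forall g, gen g -> P g) ->
    (forall y z, P y -> P z -> P (y + z)) ->
    (forall y, P y -> P (- y)) ->
    (forall y z, P y -> P z -> P (y * z)) ->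
    P x.

Definition cst (C : idomainType) (c : C) : {fraction {poly C}} := FracField.tofrac (c%:P).

(* The variable s (resp. z) of C(s) (resp. C(z)). *)
Definition var (C : idomainType) : {fraction {poly C}} := FracField.tofrac 'X.

Definition S_gen (C : fieldType) (x : {fraction {poly C}}) : Prop :=
  x = var C \/ x = (var C)^-1 \/ x = (var C - 1)^-1.
Definition in_S (C : fieldType) (x : {fraction {poly C}}) : Prop :=
  in_gen_subalg (@cst C) (@S_gen C) x.

Definition A_gen (C : fieldType) (a : C) (x : {fraction {poly C}}) : Prop :=
  exists k : int,
    x = (var C ^+ 2 - cst (a ^+ 2)) ^ k \/
    x = var C * (var C ^+ 2 - cst (a ^+ 2)) ^ k.
Definition in_A (C : fieldType) (a : C) (x : {fraction {poly C}}) : Prop :=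
  in_gen_subalg (@cst C) (A_gen a) x.

Definition phi_gen (C : fieldType) (i : 'I_3) : {fraction {poly C}} :=
  if i == iT then (var C)^-1 * (var C - 1) ^+ 2
  else if i == iW then var C * ((var C - 1) ^+ 2)^-1
  else var C - (var C)^-1.
Definition phi (C : fieldType) (p : {mpoly C[3]}) : {fraction {poly C}} :=
  mmap (@cst C) (@phi_gen C) p.

(* Main.v *)
Require Import Defs.
From HB Require Import structures.
From mathcomp Require Import all_boot all_order all_algebra.
From mathcomp Require Import reals complex mpoly.
From mathcomp Require Import ring lra.
Import GRing.Theory Num.Theory.
Local Open Scope ring_scope.
Set Implicit Arguments. Unset Strict Implicit. Unset Printing Implicit Defensive.

Section Ideal.
Variable C : comNzRingType.
Local Notation P := {mpoly C[3]}.
Local Notation T := ('X_iT : P).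
Local Notation W := ('X_iW : P).
Local Notation U := ('X_iU : P).

Definition IR (p : P) := in_R_ideal p.
Lemma IR0 : IR 0. Proof. by exists 0, 0; rewrite !mul0r addr0. Qed.
Lemma IRD p q : IR p -> IR q -> IR (p + q).
Proof. move=> [a [b ->]] [c [d ->]]; exists (a + c), (b + d); ring. Qed.
Lemma IRN p : IR p -> IR (- p).
Proof. move=> [a [b ->]]; exists (- a), (- b); ring. Qed.
Lemma IRM q p : IR p -> IR (q * p).
Proof. move=> [a [b ->]]; exists (q * a), (q * b); ring. Qed.
Lemma IRTW : IR (T * W - 1).
Proof. by exists 1, 0; rewrite mul1r mul0r addr0. Qed.
Lemma IRU : IR (U ^+ 2 - T ^+ 2 - 4%:R *: T).
Proof. by exists 0, 1; rewrite mul1r mul0r add0r. Qed.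

Definition eqI p q := IR (p - q).
Lemma eqI_refl p : eqI p p. Proof. by rewrite /eqI subrr; apply: IR0. Qed.
Lemma eqI_sym p q : eqI p q -> eqI q p.
Proof. by move=> H; rewrite /eqI -opprB; apply: IRN. Qed.
Lemma eqI_trans p q r : eqI p q -> eqI q r -> eqI p r.
Proof. by move=> H1 H2; have := IRD H1 H2; rewrite /eqI addrA subrK. Qed.
Lemma eqID p q p' q' : eqI p q -> eqI p' q' -> eqI (p + p') (q + q').
Proof. by move=> H1 H2; have := IRD H1 H2; rewrite /eqI; congr IR; ring. Qed.
Lemma eqIM p q p' q' : eqI p q -> eqI p' q' -> eqI (p * p') (q * q').
Proof.
move=> H1 H2; have := IRD (IRM p' H1) (IRM q H2); rewrite /eqI; congr IR; ring.
Qed.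
Lemma eqI_IR p q : eqI p q -> IR q -> IR p.
Proof. by move=> H1 H2; have := IRD H1 H2; rewrite subrK. Qed.

Definition embT (f : {poly C}) : P := (map_poly (@mpolyC 3 C) f).[T].
Lemma embTD f g : embT (f + g) = embT f + embT g.
Proof. by rewrite /embT rmorphD hornerD. Qed.
Lemma embTM f g : embT (f * g) = embT f * embT g.
Proof. by rewrite /embT rmorphM hornerM. Qed.
Lemma embTX : embT 'X = T.
Proof. by rewrite /embT map_polyX hornerX. Qed.
Lemma embTC c : embT c%:P = c%:MP.
Proof. by rewrite /embT map_polyC hornerC. Qed.
Lemma embT1 : embT 1 = 1.
Proof. by rewrite embTC mpolyC1. Qed.
Lemma embT0 : embT 0 = 0.
Proof. by rewrite /embT rmorph0 horner0. Qed.
Lemma embTXn k : embT ('X ^+ k) = T ^+ k.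
Proof. elim: k => [|k IH]; first by rewrite !expr0 embT1.
by rewrite !exprS embTM IH embTX. Qed.

Definition Red p := exists d f0 f1, eqI (T ^+ d * p) (embT f0 + U * embT f1).

Lemma RedD p q : Red p -> Red q -> Red (p + q).
Proof.
move=> [d [f0 [f1 H1]]] [e [g0 [g1 H2]]].
exists (d + e)%N, ('X ^+ e * f0 + 'X ^+ d * g0), ('X ^+ e * f1 + 'X ^+ d * g1).
have := eqID (eqIM (eqI_refl (T ^+ e)) H1) (eqIM (eqI_refl (T ^+ d)) H2).
rewrite !embTD !embTM !embTXn exprD.
by congr IR; ring.
Qed.

Lemma RedM p q : Red p -> Red q -> Red (p * q).
Proof.
move=> [d [f0 [f1 H1]]] [e [g0 [g1 H2]]].
exists (d + e)%N, (f0 * g0 + ('X ^+ 2 + 4%:R *: 'X) * f1 * g1), (f0 * g1 + f1 * g0).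
have H := eqIM H1 H2.
have H0 : eqI (T ^+ (d + e) * (p * q)) (T ^+ d * p * (T ^+ e * q)).
  by rewrite exprD /eqI; congr IR: IR0; ring.
apply: (eqI_trans (eqI_trans H0 H)).
rewrite !embTD !embTM !embTD !embTXn -mul_polyC embTM embTC.
have HU := IRM (embT f1 * embT g1) IRU.
rewrite /eqI; move: HU; congr IR.
rewrite -mul_mpolyC.
rewrite embTX; ring.
Qed.

Lemma RedC c : Red c%:MP.
Proof. by exists 0%N, c%:P, 0; rewrite expr0 mul1r embTC embT0 mulr0 addr0; apply: eqI_refl. Qed.

Lemma RedT : Red T.
Proof. by exists 0%N, 'X, 0; rewrite expr0 mul1r embTX embT0 mulr0 addr0; apply: eqI_refl. Qed.

Lemma RedU : Red U.
Proof. by exists 0%N, 0, 1; rewrite expr0 mul1r embT1 embT0 mulr1 add0r; apply: eqI_refl. Qed.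

Lemma RedW : Red W.
Proof. by exists 1%N, 1, 0; rewrite expr1 embT1 embT0 mulr0 addr0; apply: IRTW. Qed.

Lemma Red1 : Red 1. Proof. by rewrite -mpolyC1; apply: RedC. Qed.

Lemma RedXn p k : Red p -> Red (p ^+ k).
Proof. move=> H; elim: k => [|k IH]; first by rewrite expr0; apply: Red1.
by rewrite exprS; apply: RedM. Qed.

Lemma RedXi (i : 'I_3) : Red 'X_i.
Proof.
have : (i == iT) || (i == iW) || (i == iU).
  by case: i => -[|[|[|]]] //= Hi.
by case/orP => [/orP [] |] /eqP ->; [apply: RedT|apply: RedW|apply: RedU].
Qed.

Lemma Red_all p : Red p.
Proof.
rewrite (mpolyE p); apply: (big_ind Red).
- by rewrite -mpolyC0; apply: RedC.
- exact: RedD.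
move=> m _; rewrite -mul_mpolyC mpolyXE_id; apply: RedM; first exact: RedC.
apply: (big_ind Red); [exact: Red1|exact: RedM|].
by move=> i _; apply: RedXn; apply: RedXi.
Qed.

Lemma eqI_TWd d : eqI ((T * W) ^+ d) 1.
Proof.
elim: d => [|d IH]; first by rewrite expr0; apply: eqI_refl.
rewrite exprS -(mulr1 1); apply: eqIM; [exact: IRTW|exact: IH].
Qed.

End Ideal.

HB.instance Definition _ (C : idomainType) :=
  GRing.RMorphism.copy (@cst C) ((@FracField.tofrac {poly C}) \o (@polyC C)).

Section Alg.
Variable C : numFieldType.
Local Notation K := {fraction {poly C}}.
Local Notation tof := (@FracField.tofrac {poly C}).

Lemma root0_X (p : {poly C}) : p.[0] = 0 -> exists q, p = q * 'X.
Proof.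
move=> H; have /factor_theorem [q ->] : root p 0 by rewrite /root H.
by exists q; rewrite subr0.
Qed.

Lemma descent_n n (f0 f1 : {poly C}) : (size f1 <= n)%N ->
  f0 ^+ 2 = ('X ^+ 2 + 4%:R *: 'X) * f1 ^+ 2 -> f1 = 0.
Proof.
elim: n f0 f1 => [|n IH] f0 f1 Hs E; first by apply/size_poly_leq0P.
have X0 : ('X : {poly C}) != 0 by rewrite polyX_eq0.
have /root0_X [g Hg] : f0.[0] = 0.
  have := congr1 (horner^~ 0) E; rewrite !hornerE /= => /eqP.
  by rewrite expr0n /= !mul0r expf_eq0 /= => /eqP.
have E2 : g ^+ 2 * 'X = ('X + 4%:R%:P) * f1 ^+ 2.
  apply: (mulIf X0); transitivity (f0 ^+ 2); first by rewrite Hg; ring.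
  rewrite E -mul_polyC; ring.
have /root0_X [h Hh] : f1.[0] = 0.
  have := congr1 (horner^~ 0) E2; rewrite !hornerE /= => /esym/eqP.
  by rewrite -mulrA mulf_eq0 pnatr_eq0 /= mulf_eq0 orbb => /eqP.
have E3 : g ^+ 2 = ('X ^+ 2 + 4%:R *: 'X) * h ^+ 2.
  apply: (mulIf X0); rewrite E2 Hh -mul_polyC; ring.
have h0 : h = 0.
  apply: (IH g h _ E3).
  have [->|hn0] := eqVneq h 0; first by rewrite size_poly0.
  by move: Hs; rewrite Hh size_mulX.
by rewrite Hh h0 mul0r.
Qed.

Lemma descent (f0 f1 : {poly C}) :
  f0 ^+ 2 = ('X ^+ 2 + 4%:R *: 'X) * f1 ^+ 2 -> f1 = 0.
Proof. exact: (@descent_n (size f1)). Qed.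

Definition tau (s : K) := s^-1 * (s - 1) ^+ 2.

Lemma aux1 (F : fieldType) (A cc s sm : F) : s != 0 ->
  (A * (s^-1 * (s - 1) ^+ 2) + cc) * (s * sm) = A * sm * (s - 1) ^+ 2 + cc * (s * sm).
Proof. by move=> H; field. Qed.

Section Transc.
Variables (rho : {poly C}) (x0 : C).
Hypothesis Hx0 : rho.[x0] = 1.
Hypothesis Hr1 : rho != 1.
Let s := tof rho.

Lemma s_neq0 : s != 0.
Proof.
rewrite /s tofrac_eq0; apply/eqP => H; move: Hx0; rewrite H horner0 => /eqP.
by rewrite eq_sym oner_eq0.
Qed.

Lemma s1_neq0 : s - 1 != 0.
Proof. by rewrite /s -(rmorph1 tof) -rmorphB /= tofrac_eq0 subr_eq0. Qed.

Lemma tau_neq0 : tau s != 0.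
Proof. rewrite /tau; apply: mulf_neq0; first by rewrite invr_eq0 s_neq0.
by apply: expf_neq0; exact: s1_neq0. Qed.

Lemma repr (F : {poly C}) : exists m q,
  (map_poly (@cst C) F).[tau s] * s ^+ m = tof q /\ q.[x0] = F.[0].
Proof.
elim/poly_ind: F => [|p c [m [q [Hm Hq]]]].
  by exists 0%N, 0; rewrite !rmorph0 !horner0 mul0r.
exists m.+1, (q * (rho - 1) ^+ 2 + c%:P * rho ^+ m.+1); split; last first.
  by rewrite !hornerE Hx0 expr1n subrr /= !mulr0 add0r mulr1.
transitivity (tof q * (s - 1) ^+ 2 + cst c * s ^+ m.+1); last first.
  rewrite rmorphD (rmorphM tof q) (rmorphM tof c%:P) (rmorphXn tof) (rmorphXn tof) rmorphB rmorph1.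
  reflexivity.
rewrite -Hm.
rewrite rmorphD rmorphM /= map_polyX map_polyC hornerMXaddC.
rewrite -/s /tau [s ^+ m.+1]exprS; apply: aux1; exact: s_neq0.
Qed.

Lemma transc (F : {poly C}) : (map_poly (@cst C) F).[tau s] = 0 -> F = 0.
Proof.
elim/poly_ind: F => [//|p c IH] H.
have [m [q [Hm Hq]]] := repr (p * 'X + c%:P).
move: Hm; rewrite H mul0r => /esym/eqP; rewrite tofrac_eq0 => /eqP q0.
move: Hq; rewrite q0 horner0 hornerMXaddC mulr0 add0r => c0; subst c.
move: H; rewrite rmorphD rmorphM /= map_polyX map_polyC /= hornerMXaddC.
rewrite rmorph0 addr0 => /eqP; rewrite mulf_eq0 (negbTE tau_neq0) orbF.
by move/eqP/IH => ->; rewrite mul0r addr0.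
Qed.

End Transc.
End Alg.

Section Kernel.
Variable C : numFieldType.
Variable psi : {rmorphism {mpoly C[3]} -> {fraction {poly C}}}.
Hypothesis HC : forall c, psi c%:MP = cst c.
Hypothesis HTW : psi 'X_iT * psi 'X_iW = 1.
Hypothesis HU : psi 'X_iU ^+ 2 = psi 'X_iT ^+ 2 + 4%:R * psi 'X_iT.
Hypothesis Htr : forall F, (map_poly (@cst C) F).[psi 'X_iT] = 0 -> F = 0.

Lemma psi_embT f : psi (embT f) = (map_poly (@cst C) f).[psi 'X_iT].
Proof.
rewrite /embT -horner_map -map_poly_comp; congr (_.[_]).
by apply: eq_map_poly => c /=; exact: HC.
Qed.

Lemma psi_IR p : IR p -> psi p = 0.
Proof.
move=> [q [r ->]].
rewrite rmorphD !rmorphM !rmorphB rmorph1 -mul_mpolyC !rmorphM HC rmorph_nat.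
rewrite HTW -!expr2 HU; ring.
Qed.

Lemma sep f0 f1 :
  (map_poly (@cst C) f0).[psi 'X_iT] + psi 'X_iU * (map_poly (@cst C) f1).[psi 'X_iT] = 0 ->
  f0 = 0 /\ f1 = 0.
Proof.
set a := (map_poly _ f0).[_]; set b := (map_poly _ f1).[_]; set t := psi 'X_iT.
move=> H.
have Ha : a = - (psi 'X_iU * b) by rewrite -[a]subr0 -H; ring.
pose F := f0 * f0 - ('X * 'X + 4%:R *: 'X) * (f1 * f1).
have HF : (map_poly (@cst C) F).[t] = a * a - (t * t + 4%:R * t) * (b * b).
  rewrite /F -mul_polyC rmorphB !rmorphM rmorphD !rmorphM.
  rewrite /= map_polyX map_polyC /= !(hornerD, hornerN, hornerM) -/a -/b hornerX hornerC rmorph_nat; ring.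
have F0 : F = 0.
  apply: Htr; rewrite HF Ha; move: HU; rewrite -/t => HU'.
  transitivity ((psi 'X_iU ^+ 2 - (t ^+ 2 + 4%:R * t)) * (b * b)); first ring.
  by rewrite HU' subrr mul0r.
have f10 : f1 = 0.
  apply: (@descent _ f0); move/eqP: F0; rewrite /F subr_eq0 => /eqP E.
  by rewrite !expr2 E.
split=> //; apply: Htr; rewrite -/a Ha /b f10 rmorph0 horner0; ring.
Qed.

Lemma kernel p : psi p = 0 <-> IR p.
Proof.
split; last exact: psi_IR.
move=> H0; have [d [f0 [f1 Hr]]] := Red_all p.
have := psi_IR Hr; rewrite rmorphB rmorphM H0 mulr0 sub0r rmorphD rmorphM !psi_embT.
move=> /eqP; rewrite oppr_eq0 => /eqP /sep [E0 E1].
move: Hr; rewrite E0 E1 embT0 mulr0 addr0 => Hr.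
apply: (@eqI_IR _ _ (('X_iT * 'X_iW) ^+ d * p)).
  rewrite -[X in eqI X _]mul1r; apply: eqIM; last exact: eqI_refl.
  exact/eqI_sym/eqI_TWd.
have -> : ('X_iT * 'X_iW) ^+ d * p = 'X_iW ^+ d * ('X_iT ^+ d * p - 0).
  by rewrite subr0 exprMn mulrA [_ * 'X_iW ^+ d]mulrC.
exact: IRM.
Qed.

End Kernel.

Section Subalg.
Variables (F : fieldType) (L : comNzRingType) (emb : F -> L) (gen : L -> Prop).
Local Notation SA := (in_gen_subalg emb gen).
Lemma SA_emb c : SA (emb c). Proof. by move=> P H _ _ _ _. Qed.
Lemma SA_gen g : gen g -> SA g. Proof. by move=> Hg P _ H _ _ _; apply: H. Qed.
Lemma SA_add x y : SA x -> SA y -> SA (x + y).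
Proof. move=> Hx Hy P H1 H2 H3 H4 H5; exact: (H3 _ _ (Hx P H1 H2 H3 H4 H5) (Hy P H1 H2 H3 H4 H5)). Qed.
Lemma SA_opp x : SA x -> SA (- x).
Proof. move=> Hx P H1 H2 H3 H4 H5; exact: (H4 _ (Hx P H1 H2 H3 H4 H5)). Qed.
Lemma SA_mul x y : SA x -> SA y -> SA (x * y).
Proof. move=> Hx Hy P H1 H2 H3 H4 H5; exact: (H5 _ _ (Hx P H1 H2 H3 H4 H5) (Hy P H1 H2 H3 H4 H5)). Qed.
End Subalg.

Lemma SA_one (F : fieldType) (L : comNzRingType) (emb : {rmorphism F -> L}) gen :
  in_gen_subalg emb gen 1.
Proof. by rewrite -(rmorph1 emb); apply: SA_emb. Qed.

Lemma SA_exp (F : fieldType) (L : comNzRingType) (emb : {rmorphism F -> L}) gen x n :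
  in_gen_subalg emb gen x -> in_gen_subalg emb gen (x ^+ n).
Proof.
move=> Hx; elim: n => [|n IH]; first by rewrite expr0; apply: SA_one.
by rewrite exprS; apply: SA_mul.
Qed.

Lemma SA_mono (F : fieldType) (L : comNzRingType) (emb : F -> L) (g1 g2 : L -> Prop) x :
  (forall g, g1 g -> in_gen_subalg emb g2 g) ->
  in_gen_subalg emb g1 x -> in_gen_subalg emb g2 x.
Proof.
move=> H Hx; apply: Hx.
- exact: SA_emb.
- exact: H.
- exact: SA_add.
- exact: SA_opp.
- exact: SA_mul.
Qed.

Lemma fid1 (F : fieldType) (s : F) : s != 0 -> (2%:R : F) != 0 ->
  2%:R^-1 * (s^-1 * (s - 1) ^+ 2 + (1 + 1) + (s - s^-1)) = s.
Proof. by move=> H1 H2; field; rewrite H1 H2. Qed.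
Lemma fid2 (F : fieldType) (s : F) : s != 0 -> (2%:R : F) != 0 ->
  2%:R^-1 * (s^-1 * (s - 1) ^+ 2 + (1 + 1) - (s - s^-1)) = s^-1.
Proof. by move=> H1 H2; field; rewrite H1 H2. Qed.
Lemma fid3 (F : fieldType) (s : F) : s != 0 -> s - 1 != 0 ->
  (1 - s^-1) * (s / (s - 1) ^+ 2) = (s - 1)^-1.
Proof. by move=> H1 H2; field; rewrite H1 H2. Qed.

Section Image.
Variable C : numFieldType.
Local Notation K := {fraction {poly C}}.

Definition gen (s : K) (i : 'I_3) : K :=
  if i == iT then s^-1 * (s - 1) ^+ 2
  else if i == iW then s * ((s - 1) ^+ 2)^-1
  else s - s^-1.
Definition Sg (s : K) (x : K) : Prop := x = s \/ x = s^-1 \/ x = (s - 1)^-1.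

Variable s : K.
Hypothesis s0 : s != 0.
Hypothesis s1 : s - 1 != 0.
Local Notation psi := (mmap (@cst C) (gen s)).

Lemma psiM p q : psi (p * q) = psi p * psi q. Proof. exact: rmorphM. Qed.
Lemma psiD p q : psi (p + q) = psi p + psi q. Proof. exact: rmorphD. Qed.
Lemma psiB p q : psi (p - q) = psi p - psi q. Proof. exact: rmorphB. Qed.
Lemma psiN p : psi (- p) = - psi p. Proof. exact: rmorphN. Qed.
Lemma psi1 : psi 1 = 1. Proof. exact: rmorph1. Qed.
Lemma psin n : psi n%:R = n%:R. Proof. exact: rmorph_nat. Qed.
Lemma psiC c : psi c%:MP = cst c. Proof. exact: mmapC. Qed.

Lemma psiX i : psi 'X_i = gen s i.
Proof. by rewrite mmapX mmap1U. Qed.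

Lemma cstE c : cst c = FracField.tofrac (c%:P) :> K. Proof. by []. Qed.

Lemma cst2V : cst (2%:R^-1 : C) = 2%:R^-1.
Proof. by rewrite fmorphV rmorph_nat. Qed.

Lemma two_neq0 : (2%:R : K) != 0.
Proof.
have -> : (2%:R : K) = FracField.tofrac (2%:R : {poly C}) by rewrite rmorph_nat.
by rewrite tofrac_eq0 -polyC_natr polyC_eq0 pnatr_eq0.
Qed.

Definition Ps : {mpoly C[3]} := (2%:R^-1)%:MP * ('X_iT + 2%:R + 'X_iU).
Definition Psi : {mpoly C[3]} := (2%:R^-1)%:MP * ('X_iT + 2%:R - 'X_iU).
Definition Ps1 : {mpoly C[3]} := (1 - Psi) * 'X_iW.

Lemma psi_Ps : psi Ps = s.
Proof.
rewrite /Ps psiM psiC cst2V !psiD !psiX psi1 /gen /=.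
by rewrite (fid1 s0 two_neq0).
Qed.

Lemma psi_Psi : psi Psi = s^-1.
Proof.
rewrite /Psi psiM psiC cst2V psiB !psiD !psiX psi1 /gen /=.
by rewrite (fid2 s0 two_neq0).
Qed.

Lemma psi_Ps1 : psi Ps1 = (s - 1)^-1.
Proof.
rewrite /Ps1 psiM psiB psi1 psi_Psi psiX /gen /=.
by rewrite (fid3 s0 s1).
Qed.

Lemma image x : in_gen_subalg (@cst C) (Sg s) x <-> exists p, psi p = x.
Proof.
split.
  move=> Hx; apply: (Hx (fun y => exists p, psi p = y)).
  - by move=> c; exists c%:MP; rewrite mmapC.
  - move=> g [->|[->|->]]; [exists Ps; exact: psi_Ps|exists Psi; exact: psi_Psi
                            |exists Ps1; exact: psi_Ps1].
  - by move=> y z [p <-] [q <-]; exists (p + q); rewrite rmorphD.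
  - by move=> y [p <-]; exists (- p); rewrite rmorphN.
  - by move=> y z [p <-] [q <-]; exists (p * q); rewrite rmorphM.
move=> [p <-].
have Hs : in_gen_subalg (@cst C) (Sg s) s by apply: SA_gen; left.
have Hsi : in_gen_subalg (@cst C) (Sg s) s^-1 by apply: SA_gen; right; left.
have Hs1i : in_gen_subalg (@cst C) (Sg s) (s - 1)^-1 by apply: SA_gen; right; right.
have Hs1 : in_gen_subalg (@cst C) (Sg s) (s - 1).
  have -> : s - 1 = s + cst (-1) by rewrite rmorphN1.
  by apply: SA_add => //; apply: SA_emb.
have Hg : forall i, in_gen_subalg (@cst C) (Sg s) (gen s i).
  move=> i; rewrite /gen; case: (i == iT); first by apply: SA_mul => //; apply: SA_exp.
  case: (i == iW).
    by rewrite -exprVn; apply: SA_mul => //; apply: SA_exp.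
  by apply: SA_add => //; apply: SA_opp.
rewrite /mmap; apply: (big_ind (in_gen_subalg (@cst C) (Sg s))).
- by rewrite -(rmorph0 (@cst C)); apply: SA_emb.
- exact: SA_add.
move=> m _; apply: SA_mul; first exact: SA_emb.
rewrite /mmap1; apply: (big_ind (in_gen_subalg (@cst C) (Sg s))).
- exact: SA_one.
- exact: SA_mul.
by move=> i _; apply: SA_exp.
Qed.

End Image.

Lemma fid4 (F : fieldType) (s : F) : s != 0 -> s - 1 != 0 ->
  s^-1 * (s - 1) ^+ 2 * (s * ((s - 1) ^+ 2)^-1) = 1.
Proof. by move=> H1 H2; field; rewrite H1 H2. Qed.
Lemma fid5 (F : fieldType) (s : F) : s != 0 ->
  (s - s^-1) ^+ 2 = (s^-1 * (s - 1) ^+ 2) ^+ 2 + 4%:R * (s^-1 * (s - 1) ^+ 2).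
Proof. by move=> H1; field; rewrite H1. Qed.

Section Main.
Variable C : numFieldType.
Variables (rho : {poly C}) (x0 : C).
Hypothesis Hx0 : rho.[x0] = 1.
Hypothesis Hr1 : rho != 1.
Local Notation s := (FracField.tofrac rho).

Lemma main_kernel p : mmap (@cst C) (gen s) p = 0 <-> IR p.
Proof.
have s0 := s_neq0 Hx0; have s1 := s1_neq0 Hr1.
apply: (@kernel C (mmap (@cst C) (gen s))).
- by move=> c; exact: mmapC.
- by rewrite /= !psiX /gen /= (fid4 s0 s1).
- by rewrite /= !psiX /gen /= (fid5 s0).
- by move=> F /=; rewrite psiX /gen /=; exact: transc Hx0 Hr1 F.
Qed.

Lemma main_image x : in_gen_subalg (@cst C) (Sg s) x <-> exists p, mmap (@cst C) (gen s) p = x.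
Proof. exact: image (s_neq0 Hx0) (s1_neq0 Hr1) x. Qed.

End Main.

Section FId.
Variables (F : fieldType) (z B : F).
Hypotheses (B0 : B != 0) (t0 : (2%:R : F) != 0) (zm : z - B != 0) (zp : z + B != 0).
Local Notation s := ((2%:R * B)^-1 * (z + B)).
Let h4 : (4%:R : F) != 0.
Proof. by rewrite (_ : (4%:R : F) = 2%:R * 2%:R) ?mulf_neq0 // -natrM. Qed.
Let hw : z ^+ 2 - B ^+ 2 != 0.
Proof. by rewrite (_ : z ^+ 2 - B ^+ 2 = (z - B) * (z + B)) ?mulf_neq0 //; ring. Qed.
Let hzm : z + B + -1 * (2%:R * B) != 0.
Proof. by rewrite (_ : z + B + -1 * (2%:R * B) = z - B) //; ring. Qed.
Lemma g1 : z = 2%:R * B * s + - B.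
Proof. by field; rewrite B0 t0. Qed.
Lemma g2 : (z ^+ 2 - B ^+ 2)^-1 = (4%:R * B ^+ 2)^-1 * ((s - 1)^-1 * s^-1).
Proof. by field; rewrite B0 t0 zp hzm h4 hw. Qed.
Lemma g3 : s^-1 = 2%:R * B * (z * (z ^+ 2 - B ^+ 2)^-1 + - B * (z ^+ 2 - B ^+ 2)^-1).
Proof. by field; rewrite B0 t0 zp hw. Qed.
Lemma g4 : (s - 1)^-1 = 2%:R * B * (z * (z ^+ 2 - B ^+ 2)^-1 + B * (z ^+ 2 - B ^+ 2)^-1).
Proof. by field; rewrite B0 t0 hzm hw. Qed.
End FId.

Definition rho_a (C : fieldType) (a : C) : {poly C} := ((2%:R * a)^-1)%:P * ('X + a%:P).

Section PartTwo.
Variable C : numFieldType.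
Variable a : C.
Hypothesis a0 : a != 0.
Local Notation K := {fraction {poly C}}.
Local Notation z := (var C).
Local Notation B := (cst a).
Local Notation SA := (in_gen_subalg (@cst C) (Sg (FracField.tofrac (rho_a a)))).
Local Notation SAA := (in_gen_subalg (@cst C) (A_gen a)).

Lemma t0C : (2%:R : C) != 0. Proof. by rewrite pnatr_eq0. Qed.

Lemma rho_x0 : (rho_a a).[a] = 1.
Proof.
rewrite /rho_a hornerCM hornerD hornerX hornerC.
have t := t0C; rewrite -(mulr2n a) -mulr_natl; field.
by [].

Qed.

Lemma rho_neq1 : rho_a a != 1.
Proof.
apply/eqP => H; have := congr1 (horner^~ (- a)) H.
rewrite /rho_a hornerCM hornerD hornerX hornerC addNr mulr0 hornerC => /eqP.
by rewrite eq_sym oner_eq0.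
Qed.

Lemma B0 : B != 0. Proof. by rewrite cstE tofrac_eq0 polyC_eq0. Qed.
Lemma zmB : z - B != 0.
Proof.
have -> : z - B = FracField.tofrac ('X - a%:P) by rewrite rmorphB.
by rewrite tofrac_eq0 polyXsubC_eq0.
Qed.
Lemma zpB : z + B != 0.
Proof.
have -> : z + B = FracField.tofrac ('X - (- a)%:P) by rewrite polyCN opprK rmorphD.
by rewrite tofrac_eq0 polyXsubC_eq0.
Qed.

Lemma Es : FracField.tofrac (rho_a a) = (2%:R * B)^-1 * (z + B).
Proof.
have -> : FracField.tofrac (rho_a a) = cst ((2%:R * a)^-1) * (z + B).
  by rewrite /rho_a rmorphM rmorphD.
by rewrite fmorphV rmorphM rmorph_nat.
Qed.

Lemma SA_c y : (exists c, cst c = y) -> SA y.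
Proof. by move=> [c <-]; apply: SA_emb. Qed.
Lemma SAA_c y : (exists c, cst c = y) -> SAA y.
Proof. by move=> [c <-]; apply: SA_emb. Qed.

Lemma wE : z ^+ 2 - cst (a ^+ 2) = z ^+ 2 - B ^+ 2.
Proof. by rewrite rmorphXn. Qed.

Lemma A_to_S x : SAA x -> SA x.
Proof.
apply: SA_mono.
have t0 := two_neq0 C.
have Hs : SA ((2%:R * B)^-1 * (z + B)) by rewrite -Es; apply: SA_gen; left.
have Hsi : SA ((2%:R * B)^-1 * (z + B))^-1 by rewrite -Es; apply: SA_gen; right; left.
have Hs1i : SA ((2%:R * B)^-1 * (z + B) - 1)^-1 by rewrite -Es; apply: SA_gen; right; right.
have Hz : SA z.
  rewrite {1}(@g1 _ z B B0 t0); apply: SA_add; last by apply: SA_c; exists (- a); rewrite rmorphN.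
  apply: SA_mul => //; apply: SA_c; exists (2%:R * a); by rewrite rmorphM rmorph_nat.
have Hw : SA (z ^+ 2 - B ^+ 2).
  apply: SA_add; first by apply: SA_exp.
  by apply: SA_c; exists (- a ^+ 2); rewrite rmorphN rmorphXn.
have Hwi : SA (z ^+ 2 - B ^+ 2)^-1.
  rewrite (@g2 _ z B B0 t0 zmB zpB); apply: SA_mul; last by apply: SA_mul.
  apply: SA_c; exists ((4%:R * a ^+ 2)^-1); by rewrite fmorphV rmorphM rmorph_nat rmorphXn.
move=> g [k [->|->]]; rewrite wE.
- case: k => n; rewrite /exprz /=; first by apply: SA_exp.
  by rewrite -exprVn; apply: SA_exp.
- apply: SA_mul => //.
  case: k => n; rewrite /exprz /=; first by apply: SA_exp.
  by rewrite -exprVn; apply: SA_exp.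
Qed.

Lemma S_to_A x : SA x -> SAA x.
Proof.
apply: SA_mono.
have t0 := two_neq0 C.
have Hz : SAA z by apply: SA_gen; exists 0; right; rewrite /exprz /= expr0 mulr1.
have Hwi : SAA (z ^+ 2 - B ^+ 2)^-1.
  by rewrite -wE; apply: SA_gen; exists (-1); left; rewrite /exprz /= expr1.
have Hzwi : SAA (z * (z ^+ 2 - B ^+ 2)^-1).
  by rewrite -wE; apply: SA_gen; exists (-1); right; rewrite /exprz /= expr1.
have H2B : SAA (2%:R * B) by apply: SAA_c; exists (2%:R * a); rewrite rmorphM rmorph_nat.
rewrite Es => g [->|[->|->]].
- apply: SA_mul; last by apply: SA_add => //; apply: SA_emb.
  by apply: SAA_c; exists ((2%:R * a)^-1); rewrite fmorphV rmorphM rmorph_nat.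
- rewrite (@g3 _ z B B0 t0 zmB zpB); apply: SA_mul => //; apply: SA_add => //.
  apply: SA_mul => //; apply: SAA_c; exists (- a); by rewrite rmorphN.
- rewrite (@g4 _ z B B0 t0 zmB zpB); apply: SA_mul => //; apply: SA_add => //.
  by apply: SA_mul => //; apply: SA_emb.
Qed.

End PartTwo.

Theorem mainTheorem1 (R : realType) :
  ((forall p : {mpoly R[i][3]}, phi p = 0 <-> in_R_ideal p) /\
   (forall x : {fraction {poly R[i]}}, in_S x <-> exists p, phi p = x))
  /\
  (forall a : R[i], a != 0 ->
     exists g : {rmorphism {mpoly R[i][3]} -> {fraction {poly R[i]}}},
       (forall p, g p = 0 <-> in_R_ideal p) /\
       (forall x, in_A a x <-> exists p, g p = x)).
Proof.
split.
  have Hx0 : ('X : {poly R[i]}).[1] = 1 by rewrite hornerX.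
  have Hr1 : ('X : {poly R[i]}) != 1.
    apply/eqP => H; have := congr1 (horner^~ 0) H; rewrite hornerX hornerC => /eqP.
    by rewrite eq_sym oner_eq0.
  split => [p | x].
  - exact: (main_kernel Hx0 Hr1 p).
  - exact: (main_image Hx0 Hr1 x).
move=> a a0.
exists (mmap (@cst _) (gen (FracField.tofrac (rho_a a))) : {rmorphism _ -> _}).
split => [p | x].
- exact: (main_kernel (rho_x0 a0) (rho_neq1 a) p).
- split => [H | H].
  + by apply/(main_image (rho_x0 a0) (rho_neq1 a)); apply: A_to_S.
  + by apply: S_to_A => //; apply/(main_image (rho_x0 a0) (rho_neq1 a)).
Qed.
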